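(* Consider a chemical reaction network satisfying hypotheses (H1) and (H2) below, and let \[ Y+S_0\rightleftarrows U_1 \rightarrow Y+S_1\rightleftarrows U_2 \rightarrow \cdots \rightarrow Y+S_{L-1}\rightleftarrows U_L \rightarrow Y+S_L \] be one of its connected components ($L\ge 1$), with rate constants $a_j,b_j,c_j$ ($1\le j\le L$) as described in the context. Then all the constants $a_1,\dots,a_L,b_1,\dots,b_L,c_1,\dots,c_L$ of this component are identifiable from the single variable $s_L$ using the total derivatives $s_L^{(\ell)}$ with $1\le \ell\le \max\{2,2L-1\}$.
   Context: Species are denoted by capital letters and their concentrations by the corresponding lower-case letters. A chemical reaction network is a finite directed graph whose vertices (complexes) are nonnegative integer combinations of species (identified with vectors $y\in\mathbb{Z}_{\ge0}^s$) and whose edges $y\to y'$ (reactions) carry rate constants $k_{yy'}>0$; $\mathbf{k}$ denotes the vector of all rate constants. Under mass-action kinetics the concentrations $\mathbf{x}=(x_1,\dots,x_s)$ satisfy $\dot{\mathbf{x}}=\sum_{y\to y'}k_{yy'}\mathbf{x}^y(y'-y)$, with $\mathbf{x}^y=\prod_i x_i^{y_i}$. For a polynomial $\varphi(\mathbf{x})$, its total derivative is $\dot\varphi=\sum_i \frac{\partial\varphi}{\partial x_i}\dot x_i$, with $\dot x_i$ replaced by the right-hand side of the system; $\varphi^{(\ell)}$ is the $\ell$-th iterate ($\varphi^{(1)}=\dot\varphi$). Each $\varphi^{(\ell)}$ is a polynomial in the concentration variables with coefficients that are polynomials in $\mathbf{k}$. Identifiability: a map $\psi$ defined on $\mathbb{R}_{>0}^{\#\text{reactions}}$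 (e.g. a list of rate constants) is identifiable from variables $x_{i_1},\dots,x_{i_t}$ using derivatives of orders $1\le\ell\le D$ if for all $\mathbf{k}^*,\mathbf{k}^{**}\in\mathbb{R}_{>0}^{\#\text{reactions}}$, the equalities $x_{i_j}^{(\ell)}(\mathbf{x},\mathbf{k}^* )=x_{i_j}^{(\ell)}(\mathbf{x},\mathbf{k}^{**})$ as polynomials in $\mathbf{x}$ for all $1\le\ell\le D$, $1\le j\le t$ imply $\psi(\mathbf{k}^* )=\psi(\mathbf{k}^{**})$. Hypotheses. (H1) Every connected component of the network has the form $Y+S_0\rightleftarrows U_1\to Y+S_1\rightleftarrows\cdots\rightleftarrows U_L\to Y+S_L$, meaning the reactions $Y+S_{j-1}\to U_j$ (rate $a_j$), $U_j\to Y+S_{j-1}$ (rate $b_j$), $U_j\to Y+S_j$ (rate $c_j$), $1\le j\le L$; $Y$ is the unique enzyme of the component, the $U_j$ are intermediate species; intermediate species are all distinct throughout the whole network (each participates only in its three reactions); the non-intermediate species $S_0,\dots,S_L$ of a component are pairwise distinct but may appear (in any role, including as enzymes) in other components; each complex lies in a unique connected component. For an intermediate $U$, $\mathscr{S}_U$ denotes the set of substrates/products ($S_0,\dots,S_L$) of the component containing $U$. (H2) The set of species admits a partition $\mathscr{S}^{(0)}\sqcup\mathscr{S}^{(1)}\sqcup\cdots\sqcup\mathscr{S}^{(M)}$, $M\ge2$, into nonempty sets, where $\mathscr{S}^{(0)}$ is the set of intermediate species, such that for each intermediate $U$ whose component has enzyme $Y$ there is $\alpha\ge1$ with $\mathscr{S}_U\subseteq\mathscr{S}^{(\alpha)}$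 and $Y\notin\mathscr{S}^{(\alpha)}$. *)

(* Defs.v *)
From Stdlib Require Import Reals List ZArith Arith.
Import ListNotations.
Open Scope R_scope.

(* A network is a list of components;
   component p has the form
     Y + S_0 <=> U_1 -> Y + S_1 <=> ... <=> U_L -> Y + S_L
   with enzyme [cY], substrates/products [cS 0 .. cS L] and intermediates
   [cU 1 .. cU L].  Rate constants are indexed by (component p, step j, kind):
     (p,j,RA) = a_j : Y+S_{j-1} -> U_j
     (p,j,RB) = b_j : U_j -> Y+S_{j-1}
     (p,j,RC) = c_j : U_j -> Y+S_j                                    *)

Record component := mkComp {
  cL : nat;
  cY : nat;
  cS : nat -> nat;
  cU : nat -> nat }.

Definition network := list component.

Definition dummy_comp : component := mkComp 0 0 (fun _ => 0%nat) (fun _ => 0%nat).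
Definition nthcomp (N : network) (p : nat) : component := nth p N dummy_comp.

Inductive rkind := RA | RB | RC.

Definition rates := nat -> nat -> rkind -> R.

(* a reaction: label (p, j, kind), source complex, target complex
   (complexes are multisets of species, written as lists) *)
Definition reaction := (nat * nat * rkind * list nat * list nat)%type.

Definition comp_reactions (p : nat) (C : component) : list reaction :=
  flat_map (fun j =>
    [ (p, j, RA, [cY C; cS C (j - 1)%nat], [cU C j]);
      (p, j, RB, [cU C j], [cY C; cS C (j - 1)%nat]);
      (p, j, RC, [cU C j], [cY C; cS C j]) ]) (seq 1 (cL C)).

Definition reactions (N : network) : list reaction :=
  flat_map (fun p => comp_reactions p (nthcomp N p)) (seq 0 (length N)).

Inductive pexpr :=
  | EX (i : nat)
  | EK (p j : nat) (t : rkind)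
  | ECst (z : Z)
  | EAdd (e1 e2 : pexpr)
  | EMul (e1 e2 : pexpr).

Fixpoint eval (x : nat -> R) (k : rates) (e : pexpr) : R :=
  match e with
  | EX i => x i
  | EK p j t => k p j t
  | ECst z => IZR z
  | EAdd e1 e2 => eval x k e1 + eval x k e2
  | EMul e1 e2 => eval x k e1 * eval x k e2
  end.

Definition monomial (y : list nat) : pexpr :=
  fold_right (fun i e => EMul (EX i) e) (ECst 1) y.

Definition stoich (i : nat) (src tgt : list nat) : Z :=
  (Z.of_nat (count_occ Nat.eq_dec tgt i) - Z.of_nat (count_occ Nat.eq_dec src i))%Z.

(* mass-action right-hand side:  xdot_i = sum_{y->y'} k_{yy'} x^y (y'_i - y_i) *)
Definition rhs (N : network) (i : nat) : pexpr :=
  fold_right (fun (r : reaction) acc =>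
    match r with
    | (p, j, t, src, tgt) =>
        EAdd (EMul (EMul (EK p j t) (monomial src)) (ECst (stoich i src tgt))) acc
    end) (ECst 0) (reactions N).

(* total derivative (Lie derivative along the mass-action vector field) *)
Fixpoint tderiv (N : network) (e : pexpr) : pexpr :=
  match e with
  | EX i => rhs N i
  | EK _ _ _ => ECst 0
  | ECst _ => ECst 0
  | EAdd e1 e2 => EAdd (tderiv N e1) (tderiv N e2)
  | EMul e1 e2 => EAdd (EMul (tderiv N e1) e2) (EMul e1 (tderiv N e2))
  end.

Definition nth_deriv (N : network) (l i : nat) : pexpr :=
  Nat.iter l (tderiv N) (EX i).

Definition valid_comp (N : network) (p : nat) : Prop := (p < length N)%nat.
Definition valid_step (N : network) (p j : nat) : Prop :=
  (p < length N)%nat /\ (1 <= j <= cL (nthcomp N p))%nat.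

Definition is_intermediate (N : network) (sp : nat) : Prop :=
  exists p j, valid_step N p j /\ sp = cU (nthcomp N p) j.

Definition is_species (N : network) (sp : nat) : Prop :=
  exists p, valid_comp N p /\
    (sp = cY (nthcomp N p) \/
     (exists j, (j <= cL (nthcomp N p))%nat /\ sp = cS (nthcomp N p) j) \/
     (exists j, (1 <= j <= cL (nthcomp N p))%nat /\ sp = cU (nthcomp N p) j)).

Definition H1 (N : network) : Prop :=
  (forall p, valid_comp N p -> (1 <= cL (nthcomp N p))%nat) /\
  (forall p i j, valid_comp N p -> (i <= cL (nthcomp N p))%nat -> (j <= cL (nthcomp N p))%nat ->
     cS (nthcomp N p) i = cS (nthcomp N p) j -> i = j) /\
  (forall p j q j', valid_step N p j -> valid_step N q j' ->
     cU (nthcomp N p) j = cU (nthcomp N q) j' -> p = q /\ j = j') /\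
  (* intermediates participate only in their three reactions:
     they are never an enzyme or a substrate/product *)
  (forall p j q, valid_step N p j -> valid_comp N q ->
     cU (nthcomp N p) j <> cY (nthcomp N q) /\
     forall j', (j' <= cL (nthcomp N q))%nat -> cU (nthcomp N p) j <> cS (nthcomp N q) j') /\
  (* each complex lies in a unique connected component:
     complexes Y_p + S_{p,j} and Y_q + S_{q,j'} differ (as multisets) for p <> q *)
  (forall p q j j', valid_comp N p -> valid_comp N q -> p <> q ->
     (j <= cL (nthcomp N p))%nat -> (j' <= cL (nthcomp N q))%nat ->
     ~ (cY (nthcomp N p) = cY (nthcomp N q) /\ cS (nthcomp N p) j = cS (nthcomp N q) j') /\
     ~ (cY (nthcomp N p) = cS (nthcomp N q) j' /\ cS (nthcomp N p) j = cY (nthcomp N q))).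

Definition H2 (N : network) : Prop :=
  exists (M : nat) (part : nat -> nat),
    (2 <= M)%nat /\
    (* part is a partition of the species into classes 0..M, class 0 = intermediates *)
    (forall sp, is_species N sp -> (part sp <= M)%nat /\ (part sp = 0%nat <-> is_intermediate N sp)) /\
    (forall alpha, (alpha <= M)%nat -> exists sp, is_species N sp /\ part sp = alpha) /\
    (forall p, valid_comp N p ->
       exists alpha, (1 <= alpha)%nat /\
         (forall j, (j <= cL (nthcomp N p))%nat -> part (cS (nthcomp N p) j) = alpha) /\
         part (cY (nthcomp N p)) <> alpha).

Definition positive_rates (N : network) (k : rates) : Prop :=
  forall p j t, valid_step N p j -> 0 < k p j t.

Definition identifiable_from {A : Type} (N : network) (psi : rates -> A)
    (vars : list nat) (D : nat) : Prop :=
  forall k1 k2 : rates, positive_rates N k1 -> positive_rates N k2 ->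
    (forall l i, (1 <= l <= D)%nat -> In i vars ->
       forall x : nat -> R, eval x k1 (nth_deriv N l i) = eval x k2 (nth_deriv N l i)) ->
    psi k1 = psi k2.

Definition comp_constants (N : network) (p : nat) (k : rates) : list R :=
  flat_map (fun j => [k p j RA; k p j RB; k p j RC]) (seq 1 (cL (nthcomp N p))).

(* Main.v *)
Require Import Defs.
From Stdlib Require Import Reals List Arith Lia Lra ZArith Classical.
From Coquelicot Require Import Coquelicot.
Import ListNotations.
Local Open Scope R_scope.

Definition line (x g : nat -> R) (h : R) : nat -> R := fun i => x i + h * g i.

Fixpoint dirv (x g : nat -> R) (k : rates) (e : pexpr) : R :=
  match e with
  | EX i => g i
  | EK _ _ _ => 0 | ECst _ => 0
  | EAdd e1 e2 => dirv x g k e1 + dirv x g k e2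
  | EMul e1 e2 => dirv x g k e1 * eval x k e2 + eval x k e1 * dirv x g k e2
  end.

Lemma eval_ext x x' k e : (forall i, x i = x' i) -> eval x k e = eval x' k e.
Proof. intros H; induction e; simpl; try rewrite IHe1, IHe2; auto. Qed.

Lemma line0 x g k e : eval (line x g 0) k e = eval x k e.
Proof. apply eval_ext; intro i; unfold line; ring. Qed.

Lemma dirv_derive x g k e : is_derive (fun h => eval (line x g h) k e) 0 (dirv x g k e).
Proof.
  induction e; simpl.
  - unfold line. auto_derive; auto; ring.
  - apply (is_derive_const (k p j t) 0).
  - apply (is_derive_const (IZR z) 0).
  - apply (is_derive_plus _ _ _ _ _ IHe1 IHe2).
  - pose proof (is_derive_mult _ _ _ _ _ IHe1 IHe2 Rmult_comm) as H.
    simpl in H. rewrite !line0 in H. exact H.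
Qed.

Definition Gv (N : network) (x : nat -> R) (k : rates) : nat -> R := fun i => eval x k (rhs N i).

Lemma dirv_tderiv N x k e : dirv x (Gv N x k) k e = eval x k (tderiv N e).
Proof. induction e; simpl; try rewrite IHe1, IHe2; auto. Qed.

Lemma step N k e (P : (nat -> R) -> Prop) (Phi : (nat -> R) -> R) x v :
  (forall z, P z -> eval z k e = Phi z) ->
  (forall h, P (line x (Gv N x k) h)) ->
  is_derive (fun h => Phi (line x (Gv N x k) h)) 0 v ->
  eval x k (tderiv N e) = v.
Proof.
  intros HP Hl Hd. rewrite <- dirv_tderiv.
  pose proof (dirv_derive x (Gv N x k) k e) as D.
  apply (is_derive_ext _ (fun h => Phi (line x (Gv N x k) h))) in D.
  - apply is_derive_unique in D. apply is_derive_unique in Hd. congruence.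
  - intro t. apply HP. apply Hl.
Qed.

Definition sumR {A} (l : list A) (f : A -> R) : R := fold_right (fun a acc => f a + acc) 0 l.

Lemma sumR_app {A} (l1 l2 : list A) f : sumR (l1 ++ l2) f = sumR l1 f + sumR l2 f.
Proof. induction l1; simpl; [ring| rewrite IHl1; ring]. Qed.

Lemma sumR_flat_map {A B} (l : list A) (g : A -> list B) f :
  sumR (flat_map g l) f = sumR l (fun a => sumR (g a) f).
Proof. induction l; simpl; auto. rewrite sumR_app, IHl; auto. Qed.

Lemma sumR_ext_in {A} (l : list A) f g : (forall a, In a l -> f a = g a) -> sumR l f = sumR l g.
Proof. induction l; simpl; intros H; auto. rewrite H, IHl; auto. Qed.

Lemma sumR_plus {A} (l : list A) f g : sumR l (fun a => f a + g a) = sumR l f + sumR l g.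
Proof. induction l; simpl; [ring| rewrite IHl; ring]. Qed.

Lemma sumR_zero {A} (l : list A) f : (forall a, In a l -> f a = 0) -> sumR l f = 0.
Proof. induction l; simpl; intros H; auto. rewrite H, IHl; auto; ring. Qed.

Lemma sumR_single {A} (l : list A) f i : NoDup l -> In i l ->
  (forall j, In j l -> j <> i -> f j = 0) -> sumR l f = f i.
Proof.
  induction l as [|a l IH]; simpl; intros Hnd Hin H; [contradiction|].
  inversion Hnd; subst. destruct Hin as [<-|Hin].
  - rewrite sumR_zero; [ring|]. intros j Hj. apply H; auto. intro; subst; contradiction.
  - rewrite H; auto. rewrite IH; auto. ring. intro; subst; contradiction.
Qed.

Lemma sumR_delta (l : list nat) f i : NoDup l -> In i l ->
  sumR l (fun j => if Nat.eqb j i then f j else 0) = f i.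
Proof.
  intros Hn Hi. rewrite (sumR_single _ _ i Hn Hi). rewrite Nat.eqb_refl; auto.
  intros j _ Hj. apply Nat.eqb_neq in Hj. rewrite Hj; auto.
Qed.

Definition prodR (x : nat -> R) (l : list nat) : R := fold_right (fun a acc => x a * acc) 1 l.

Lemma eval_monomial x k y : eval x k (monomial y) = prodR x y.
Proof. induction y; simpl; auto. rewrite IHy; auto. Qed.

Definition rterm (x : nat -> R) (k : rates) (i : nat) (r : reaction) : R :=
  match r with (p, j, t, src, tgt) => k p j t * prodR x src * IZR (stoich i src tgt) end.

Lemma eval_rhs N x k i : eval x k (rhs N i) = sumR (reactions N) (rterm x k i).
Proof.
  unfold rhs. induction (reactions N) as [|r l IH]; simpl; auto.
  destruct r as [[[[p j] t] src] tgt]. simpl. rewrite IH, eval_monomial. auto.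
Qed.

Definition ind (a f : nat) : R := if Nat.eq_dec a f then 1 else 0.
Definition cntR (l : list nat) (f : nat) : R := sumR l (fun a => ind a f).

Lemma count_cntR l f : INR (count_occ Nat.eq_dec l f) = cntR l f.
Proof.
  induction l; simpl; auto. unfold cntR in *; simpl. unfold ind at 1.
  destruct (Nat.eq_dec a f); rewrite ?S_INR, IHl; ring.
Qed.

Lemma stoichR i src tgt : IZR (stoich i src tgt) = cntR tgt i - cntR src i.
Proof. unfold stoich. rewrite minus_IZR, <- !INR_IZR_INZ, !count_cntR. auto. Qed.

Lemma ind_eq a : ind a a = 1.
Proof. unfold ind; destruct (Nat.eq_dec a a); congruence. Qed.
Lemma ind_neq a f : a <> f -> ind a f = 0.
Proof. unfold ind; destruct (Nat.eq_dec a f); congruence. Qed.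
Definition LL N p := cL (nthcomp N p).
Definition YY N p := cY (nthcomp N p).
Definition SS N p i := cS (nthcomp N p) i.
Definition UU N p j := cU (nthcomp N p) j.

Definition chain N p sp : Prop :=
  sp = YY N p \/ (exists i, (i <= LL N p)%nat /\ sp = SS N p i) \/
  (exists j, (1 <= j <= LL N p)%nat /\ sp = UU N p j).

Definition Vset N p (x : nat -> R) : Prop := forall sp, ~ chain N p sp -> x sp = 0.

Record Good N p : Prop := {
  g_p : (p < length N)%nat;
  g_L : (1 <= LL N p)%nat;
  g_Sinj : forall i j, (i <= LL N p)%nat -> (j <= LL N p)%nat -> SS N p i = SS N p j -> i = j;
  g_Uinj : forall i j, (1 <= i <= LL N p)%nat -> (1 <= j <= LL N p)%nat -> UU N p i = UU N p j -> i = j;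
  g_UY : forall j, (1 <= j <= LL N p)%nat -> UU N p j <> YY N p;
  g_US : forall j i, (1 <= j <= LL N p)%nat -> (i <= LL N p)%nat -> UU N p j <> SS N p i;
  g_YS : forall i, (i <= LL N p)%nat -> YY N p <> SS N p i;
  g_othU : forall q j, (q < length N)%nat -> q <> p -> (1 <= j <= cL (nthcomp N q))%nat ->
     ~ chain N p (cU (nthcomp N q) j);
  g_othYS : forall q i, (q < length N)%nat -> q <> p -> (i <= cL (nthcomp N q))%nat ->
     ~ chain N p (cY (nthcomp N q)) \/ ~ chain N p (cS (nthcomp N q) i)
}.

Lemma good_of N p : H1 N -> H2 N -> (p < length N)%nat -> Good N p.
Proof.
  intros [h1 [h2 [h3 [h4 h5]]]] [M [part [HM [Hpart [Hne Hcl]]]]] Hp.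
  unfold LL, YY, SS, UU, chain.
  destruct (Hcl p Hp) as [ap [Hap1 [HapS HapY]]].
  constructor; unfold LL, YY, SS, UU, chain; auto.
  - intros i j Hi Hj E. apply h2 with p; auto.
  - intros i j Hi Hj E. refine (proj2 (h3 p i p j _ _ E)); split; auto.
  - intros j Hj. apply (h4 p j p); [split|]; auto.
  - intros j i Hj Hi. apply (h4 p j p); [split| |]; auto.
  - intros i Hi E. apply HapY. rewrite E. apply HapS; auto.
  - intros q j Hq Hqp Hj [E|[[i [Hi E]]|[j' [Hj' E]]]].
    + apply (h4 q j p); [split| |]; auto.
    + apply (h4 q j p) with i; [split| | |]; auto.
    + destruct (h3 q j p j') as [E1 _]; [split|split| |]; auto.
  - intros q i Hq Hqp Hi.
    destruct (Hcl q Hq) as [aq [Haq1 [HaqS HaqY]]].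
    apply NNPP; intro Hn. apply not_or_and in Hn. destruct Hn as [Hy Hs].
    apply NNPP in Hy. apply NNPP in Hs.
    destruct Hy as [Ey|[[a [Ha Ey]]|[j [Hj Ey]]]];
    destruct Hs as [Es|[[b [Hb Es]]|[j' [Hj' Es]]]]; unfold YY, SS, UU, LL in *.
    + apply HaqY. rewrite Ey, <- Es. apply HaqS; auto.
    + apply (proj1 (h5 p q b i Hp Hq (not_eq_sym Hqp) Hb Hi)); split; auto.
    + apply (proj2 (h4 p j' q (conj Hp Hj') Hq) i Hi); auto.
    + apply (proj2 (h5 p q a i Hp Hq (not_eq_sym Hqp) Ha Hi)); split; auto.
    + apply HaqY. rewrite Ey. rewrite HapS by auto. rewrite <- (HapS b Hb), <- Es. apply HaqS; auto.
    + apply (proj2 (h4 p j' q (conj Hp Hj') Hq) i Hi); auto.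
    + apply (proj1 (h4 p j q (conj Hp Hj) Hq)); auto.
    + apply (proj1 (h4 p j q (conj Hp Hj) Hq)); auto.
    + apply (proj1 (h4 p j q (conj Hp Hj) Hq)); auto.
Qed.

Lemma Gform N p k x f : Good N p -> Vset N p x -> Gv N x k f = sumR (seq 1 (LL N p)) (fun j =>
  k p j RA * x (YY N p) * x (SS N p (j-1)) * (ind (UU N p j) f - ind (YY N p) f - ind (SS N p (j-1)) f)
  + k p j RB * x (UU N p j) * (ind (YY N p) f + ind (SS N p (j-1)) f - ind (UU N p j) f)
  + k p j RC * x (UU N p j) * (ind (YY N p) f + ind (SS N p j) f - ind (UU N p j) f)).
Proof.
  intros G V. unfold Gv. rewrite eval_rhs. unfold reactions. rewrite sumR_flat_map.
  rewrite (sumR_single _ _ p).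
  - unfold comp_reactions. rewrite sumR_flat_map. apply sumR_ext_in. intros j Hj.
    simpl. rewrite !stoichR. unfold cntR. simpl. unfold LL, YY, SS, UU. ring.
  - apply seq_NoDup.
  - apply in_seq. pose proof (g_p _ _ G). lia.
  - intros q Hq Hqp. apply in_seq in Hq. unfold comp_reactions. rewrite sumR_flat_map.
    apply sumR_zero. intros j Hj. apply in_seq in Hj. simpl.
    assert (HU : x (cU (nthcomp N q) j) = 0).
    { apply V. apply (g_othU _ _ G); lia. }
    assert (HYS : x (cY (nthcomp N q)) * x (cS (nthcomp N q) (j - 1)) = 0).
    { destruct (g_othYS _ _ G q (j-1)) as [H|H]; try lia.
      - rewrite (V _ H). ring.
      - rewrite (V _ H). ring. }
    rewrite HU. replace (k q j RA * (x (cY (nthcomp N q)) * (x (cS (nthcomp N q) (j - 1)) * 1)))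
      with (k q j RA * (x (cY (nthcomp N q)) * x (cS (nthcomp N q) (j - 1)))) by ring.
    rewrite HYS. ring.
Qed.

Section dummy. End dummy.
Lemma indSS N p a i : Good N p -> (a <= LL N p)%nat -> (i <= LL N p)%nat ->
  ind (SS N p a) (SS N p i) = if Nat.eqb a i then 1 else 0.
Proof.
  intros G Ha Hi. destruct (Nat.eqb_spec a i).
  - subst; apply ind_eq.
  - apply ind_neq. intro E. apply n. apply (g_Sinj _ _ G); auto.
Qed.

Lemma indUU N p a i : Good N p -> (1 <= a <= LL N p)%nat -> (1 <= i <= LL N p)%nat ->
  ind (UU N p a) (UU N p i) = if Nat.eqb a i then 1 else 0.
Proof.
  intros G Ha Hi. destruct (Nat.eqb_spec a i).
  - subst; apply ind_eq.
  - apply ind_neq. intro E. apply n. apply (g_Uinj _ _ G); auto.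
Qed.

Ltac neqs G := let E := fresh "E" in intro E; first
 [ refine (g_US _ _ G _ _ _ _ E); lia
 | refine (g_US _ _ G _ _ _ _ (eq_sym E)); lia
 | refine (g_UY _ _ G _ _ E); lia
 | refine (g_UY _ _ G _ _ (eq_sym E)); lia
 | refine (g_YS _ _ G _ _ E); lia
 | refine (g_YS _ _ G _ _ (eq_sym E)); lia ].

Lemma GU N p k x i : Good N p -> Vset N p x -> (1 <= i <= LL N p)%nat ->
  Gv N x k (UU N p i) = k p i RA * x (YY N p) * x (SS N p (i-1)) - (k p i RB + k p i RC) * x (UU N p i).
Proof.
  intros G V Hi. rewrite (Gform N p) by auto.
  rewrite (sumR_single _ _ i); [| apply seq_NoDup | apply in_seq; lia |].
  - rewrite ind_eq, !ind_neq; [ring| neqs G ..].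
  - intros j Hj Hji. apply in_seq in Hj.
    rewrite (indUU _ _ j i) by (auto; lia). apply Nat.eqb_neq in Hji. rewrite Hji.
    rewrite !ind_neq; [ring| neqs G ..].
Qed.

Lemma GY N p k x : Good N p -> Vset N p x ->
  Gv N x k (YY N p) = sumR (seq 1 (LL N p)) (fun j =>
     - k p j RA * x (YY N p) * x (SS N p (j-1)) + (k p j RB + k p j RC) * x (UU N p j)).
Proof.
  intros G V. rewrite (Gform N p) by auto. apply sumR_ext_in. intros j Hj. apply in_seq in Hj.
  rewrite ind_eq, !ind_neq; [ring| neqs G ..].
Qed.

Lemma Gnon N p k x f : Good N p -> Vset N p x -> ~ chain N p f -> Gv N x k f = 0.
Proof.
  intros G V Hf. rewrite (Gform N p) by auto. apply sumR_zero. intros j Hj. apply in_seq in Hj.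
  rewrite !ind_neq; [ring| ..]; intro E; apply Hf; subst f; unfold chain.
  all: first [ left; reflexivity | right; left; eexists; split; [|reflexivity]; lia
             | right; right; eexists; split; [|reflexivity]; lia ].
Qed.

Lemma GS_form N p k x i : Good N p -> Vset N p x -> (i <= LL N p)%nat ->
  Gv N x k (SS N p i) = sumR (seq 1 (LL N p)) (fun j =>
    (if Nat.eqb j (S i) then - k p j RA * x (YY N p) * x (SS N p i) + k p j RB * x (UU N p j) else 0)
    + (if Nat.eqb j i then k p j RC * x (UU N p j) else 0)).
Proof.
  intros G V Hi. rewrite (Gform N p) by auto. apply sumR_ext_in. intros j Hj. apply in_seq in Hj.
  rewrite (indSS _ _ (j-1) i), (indSS _ _ j i) by (auto; lia).
  rewrite !ind_neq; [|neqs G ..].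
  destruct (Nat.eqb_spec j (S i)); destruct (Nat.eqb_spec (j-1) i); destruct (Nat.eqb_spec j i);
    try lia; try (subst; replace (S i - 1)%nat with i by lia); ring.
Qed.

Lemma GS_mid N p k x i : Good N p -> Vset N p x -> (1 <= i < LL N p)%nat ->
  Gv N x k (SS N p i) = - k p (S i) RA * x (YY N p) * x (SS N p i) + k p (S i) RB * x (UU N p (S i))
     + k p i RC * x (UU N p i).
Proof.
  intros G V Hi. rewrite GS_form by (auto; lia). rewrite sumR_plus.
  rewrite (sumR_delta _ (fun j => - k p j RA * x (YY N p) * x (SS N p i) + k p j RB * x (UU N p j))),
     (sumR_delta _ (fun j => k p j RC * x (UU N p j))); try apply seq_NoDup; try (apply in_seq; lia).
  ring.
Qed.

Lemma GS_top N p k x : Good N p -> Vset N p x ->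
  Gv N x k (SS N p (LL N p)) = k p (LL N p) RC * x (UU N p (LL N p)).
Proof.
  intros G V. pose proof (g_L _ _ G). rewrite GS_form by (auto; lia). rewrite sumR_plus.
  rewrite (sumR_delta _ (fun j => k p j RC * x (UU N p j))); try apply seq_NoDup; try (apply in_seq; lia).
  rewrite sumR_zero; [ring|]. intros j Hj. apply in_seq in Hj.
  destruct (Nat.eqb_spec j (S (LL N p))); [lia|auto].
Qed.

Lemma dl (K y g w: R) (m:nat): is_derive (fun h => K * (y + h*g)^m * (0 + h*w)) 0 (K * y^m * w).
Proof. auto_derive. auto. simpl. rewrite !Rmult_0_l, !Rplus_0_r. ring. Qed.

Definition FF N p k l x := eval x k (nth_deriv N l (SS N p (LL N p))).

Fixpoint Kc (k : rates) (p L m : nat) : R :=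
  match m with O => 1 | S m => Kc k p L m * k p (L - m)%nat RC * k p (L - m)%nat RA end.

Definition Zc N p m (x : nat -> R) : Prop :=
  forall i, (LL N p - m < i <= LL N p)%nat -> x (SS N p i) = 0 /\ x (UU N p i) = 0.

Lemma line_V N p k x h : Good N p -> Vset N p x -> Vset N p (line x (Gv N x k) h).
Proof. intros G V sp Hsp. unfold line. rewrite V, (Gnon N p) by auto. ring. Qed.

Lemma GS_zero N p k x i : Good N p -> Vset N p x -> (1 <= i <= LL N p)%nat ->
  x (SS N p i) = 0 -> x (UU N p i) = 0 -> ((i < LL N p)%nat -> x (UU N p (S i)) = 0) ->
  Gv N x k (SS N p i) = 0.
Proof.
  intros G V Hi H1 H2 H3. destruct (Nat.eq_dec i (LL N p)).
  - subst. rewrite GS_top by auto. rewrite H2. ring.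
  - rewrite GS_mid by (auto; lia). rewrite H1, H2, H3 by lia. ring.
Qed.

Lemma Zc_line N p k x m h : Good N p -> Vset N p x -> (m <= LL N p - 1)%nat -> Zc N p m x ->
  x (SS N p (LL N p - m)) = 0 -> Zc N p m (line x (Gv N x k) h).
Proof.
  intros G V Hm Z Hs i Hi. pose proof (g_L _ _ G). unfold line.
  destruct (Z i Hi) as [Zs Zu]. rewrite Zs, Zu. split.
  - rewrite (GS_zero N p) by (auto; try lia; intros; apply (Z (S i)); lia). ring.
  - rewrite GU by (auto; lia). rewrite Zu.
    assert (x (SS N p (i-1)) = 0) as ->.
    { destruct (Nat.eq_dec (i-1) (LL N p - m)) as [e|e]; [rewrite e; auto| apply (Z (i-1)%nat); lia]. }
    ring.
Qed.

Lemma Zc_S N p m x : Zc N p (S m) x -> Zc N p m x.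
Proof. intros Z i Hi. apply Z. lia. Qed.

Definition Eclaim N p k m := forall x, Vset N p x -> Zc N p m x ->
  FF N p k (2 * m) x = Kc k p (LL N p) m * x (YY N p) ^ m * x (SS N p (LL N p - m)).
Definition Oclaim N p k m := forall x, Vset N p x -> Zc N p m x -> x (SS N p (LL N p - m)) = 0 ->
  FF N p k (S (2 * m)) x = Kc k p (LL N p) m * k p (LL N p - m)%nat RC * x (YY N p) ^ m * x (UU N p (LL N p - m)).

Lemma E_to_O N p k m : Good N p -> (m <= LL N p - 1)%nat -> Eclaim N p k m -> Oclaim N p k m.
Proof.
  intros G Hm HE x V Z Hs. pose proof (g_L _ _ G). unfold FF. simpl nth_deriv.
  change (nth_deriv N (S (2*m)) (SS N p (LL N p))) with (tderiv N (nth_deriv N (2*m) (SS N p (LL N p)))).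
  apply (step N k _ (fun z => Vset N p z /\ Zc N p m z)
     (fun z => Kc k p (LL N p) m * z (YY N p) ^ m * z (SS N p (LL N p - m)))).
  - intros z [Vz Zz]. apply HE; auto.
  - intros h; split; [apply line_V | apply Zc_line]; auto.
  - assert (HG : Gv N x k (SS N p (LL N p - m)) = k p (LL N p - m)%nat RC * x (UU N p (LL N p - m))).
    { destruct (Nat.eq_dec m 0) as [e|e].
      - subst. rewrite Nat.sub_0_r. apply GS_top; auto.
      - rewrite GS_mid by (auto; lia). rewrite Hs.
        rewrite (proj2 (Z (S (LL N p - m)) ltac:(lia))). ring. }
    replace (Kc k p (LL N p) m * k p (LL N p - m)%nat RC * x (YY N p) ^ m * x (UU N p (LL N p - m)))
      with (Kc k p (LL N p) m * x (YY N p) ^ m * Gv N x k (SS N p (LL N p - m))) by (rewrite HG; ring).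
    eapply is_derive_ext; [|apply dl]. intro t. simpl. unfold line. rewrite Hs. reflexivity.
Qed.

Lemma O_to_E N p k m : Good N p -> (S m <= LL N p - 1)%nat -> Oclaim N p k m -> Eclaim N p k (S m).
Proof.
  intros G Hm HO x V Z. pose proof (g_L _ _ G). unfold FF.
  replace (2 * S m)%nat with (S (S (2 * m))) by lia.
  change (nth_deriv N (S (S (2*m))) (SS N p (LL N p))) with (tderiv N (nth_deriv N (S (2*m)) (SS N p (LL N p)))).
  assert (Hs : x (SS N p (LL N p - m)) = 0) by (apply (Z (LL N p - m)%nat); lia).
  assert (Hu : x (UU N p (LL N p - m)) = 0) by (apply (Z (LL N p - m)%nat); lia).
  apply (step N k _ (fun z => Vset N p z /\ Zc N p m z /\ z (SS N p (LL N p - m)) = 0)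
     (fun z => Kc k p (LL N p) m * k p (LL N p - m)%nat RC * z (YY N p) ^ m * z (UU N p (LL N p - m)))).
  - intros z [Vz [Zz Sz]]. apply HO; auto.
  - intros h; split; [apply line_V; auto|split; [apply Zc_line; auto; [lia|apply Zc_S; auto]|]].
    unfold line. rewrite Hs. rewrite (GS_zero N p) by (auto; try lia; intros; apply (Z (S (LL N p - m))); lia).
    ring.
  - replace (Kc k p (LL N p) (S m) * x (YY N p) ^ S m * x (SS N p (LL N p - S m)))
      with (Kc k p (LL N p) m * k p (LL N p - m)%nat RC * x (YY N p) ^ m * Gv N x k (UU N p (LL N p - m))).
    + eapply is_derive_ext; [|apply dl]. intro t. simpl. unfold line. rewrite Hu. reflexivity.
    + rewrite GU by (auto; lia). rewrite Hu.
      replace (LL N p - S m)%nat with (LL N p - m - 1)%nat by lia. simpl. ring.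
Qed.

Lemma EO_all N p k m : Good N p -> (m <= LL N p - 1)%nat -> Eclaim N p k m /\ Oclaim N p k m.
Proof.
  intros G. induction m; intros Hm.
  - assert (E0 : Eclaim N p k 0).
    { intros x V Z. unfold FF. simpl. rewrite Nat.sub_0_r. ring. }
    split; auto. apply E_to_O; auto.
  - destruct IHm as [_ HO]; [lia|].
    assert (ES : Eclaim N p k (S m)) by (apply O_to_E; auto).
    split; auto. apply E_to_O; auto.
Qed.

Lemma FF1 N p k x : Good N p -> Vset N p x ->
  FF N p k 1 x = k p (LL N p) RC * x (UU N p (LL N p)).
Proof. intros G V. unfold FF. simpl. apply (GS_top N p k x G V). Qed.

Lemma FF2 N p k x : Good N p -> Vset N p x ->
  FF N p k 2 x = k p (LL N p) RC * (k p (LL N p) RA * x (YY N p) * x (SS N p (LL N p - 1))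
     - (k p (LL N p) RB + k p (LL N p) RC) * x (UU N p (LL N p))).
Proof.
  intros G V. pose proof (g_L _ _ G). unfold FF.
  change (nth_deriv N 2 (SS N p (LL N p))) with (tderiv N (nth_deriv N 1 (SS N p (LL N p)))).
  rewrite <- (GU N p k x) by (auto; lia).
  apply (step N k _ (Vset N p) (fun z => k p (LL N p) RC * z (UU N p (LL N p)))).
  - intros z Vz. apply (FF1 N p k z G Vz).
  - intros h; apply line_V; auto.
  - unfold line. auto_derive; auto. ring.
Qed.

Lemma FF3 N p k x : Good N p -> Vset N p x -> (2 <= LL N p)%nat ->
  FF N p k 3 x = k p (LL N p) RC * (k p (LL N p) RA * (Gv N x k (YY N p) * x (SS N p (LL N p - 1))
       + x (YY N p) * Gv N x k (SS N p (LL N p - 1)))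
     - (k p (LL N p) RB + k p (LL N p) RC) * Gv N x k (UU N p (LL N p))).
Proof.
  intros G V HL. unfold FF.
  change (nth_deriv N 3 (SS N p (LL N p))) with (tderiv N (nth_deriv N 2 (SS N p (LL N p)))).
  apply (step N k _ (Vset N p) (fun z => k p (LL N p) RC * (k p (LL N p) RA * z (YY N p) * z (SS N p (LL N p - 1))
     - (k p (LL N p) RB + k p (LL N p) RC) * z (UU N p (LL N p))))).
  - intros z Vz. apply (FF2 N p k z G Vz).
  - intros h; apply line_V; auto.
  - unfold line. auto_derive; auto. ring.
Qed.

Definition pt (l : list nat) : nat -> R := fun sp => if existsb (Nat.eqb sp) l then 1 else 0.

Lemma pt_in l sp : In sp l -> pt l sp = 1.
Proof.
  intros H. unfold pt. replace (existsb (Nat.eqb sp) l) with true; auto.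
  symmetry. apply existsb_exists. exists sp; split; auto. apply Nat.eqb_refl.
Qed.

Lemma pt_out l sp : (forall a, In a l -> a <> sp) -> pt l sp = 0.
Proof.
  intros H. unfold pt. destruct (existsb (Nat.eqb sp) l) eqn:E; auto.
  apply existsb_exists in E. destruct E as [a [Ha Hb]]. apply Nat.eqb_eq in Hb. subst.
  exfalso. apply (H a Ha); auto.
Qed.

Lemma Vset_pt N p l : (forall a, In a l -> chain N p a) -> Vset N p (pt l).
Proof. intros H sp Hsp. apply pt_out. intros a Ha E. subst. apply Hsp, H; auto. Qed.

Lemma Kc_pos N p k m : positive_rates N k -> Good N p -> (m <= LL N p)%nat -> 0 < Kc k p (LL N p) m.
Proof.
  intros P G. pose proof (g_p _ _ G). induction m; simpl; intros Hm; [lra|].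
  assert (0 < k p (LL N p - m)%nat RC) by (apply P; split; unfold LL in *; [auto|lia]).
  assert (0 < k p (LL N p - m)%nat RA) by (apply P; split; unfold LL in *; [auto|lia]).
  pose proof (IHm ltac:(lia)). apply Rmult_lt_0_compat; [apply Rmult_lt_0_compat|]; auto.
Qed.

Ltac chainok := unfold chain; first [ left; reflexivity
  | right; left; eexists; split; [|reflexivity]; lia
  | right; right; eexists; split; [|reflexivity]; lia ].

Lemma Sinj' N p i j : Good N p -> SS N p i = SS N p j -> (i <= LL N p)%nat -> (j <= LL N p)%nat -> i = j.
Proof. intros G E Hi Hj. apply (g_Sinj _ _ G); auto. Qed.
Lemma Uinj' N p i j : Good N p -> UU N p i = UU N p j -> (1 <= i <= LL N p)%nat -> (1 <= j <= LL N p)%nat -> i = j.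
Proof. intros G E Hi Hj. apply (g_Uinj _ _ G); auto. Qed.

Ltac ptout G := simpl; let a := fresh "a" in let Ha := fresh "Ha" in intros a Ha;
  repeat destruct Ha as [<-|Ha]; try contradiction;
  first [ neqs G | let E := fresh "E" in intro E;
     first [ apply (Sinj' _ _ _ _ G) in E; lia | apply (Uinj' _ _ _ _ G) in E; lia ] ].
Ltac ptin := simpl; tauto.

Lemma GY_pt1 N p k j : Good N p -> (1 <= j < LL N p)%nat ->
  Gv N (pt [UU N p j; SS N p (LL N p - 1)]) k (YY N p) = k p j RB + k p j RC.
Proof.
  intros G Hj. rewrite GY by (auto; apply Vset_pt; simpl; intros a [<-|[<-|[]]]; chainok).
  rewrite (pt_out _ (YY N p)) by ptout G.
  rewrite <- (sumR_delta (seq 1 (LL N p)) (fun j => k p j RB + k p j RC) j); try apply seq_NoDup; try (apply in_seq; lia).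
  apply sumR_ext_in. intros j' Hj'. apply in_seq in Hj'.
  destruct (Nat.eqb_spec j' j).
  - subst. rewrite (pt_in _ (UU N p j)) by ptin. ring.
  - rewrite (pt_out _ (UU N p j')) by ptout G. ring.
Qed.

Lemma GY_pt2 N p k : Good N p -> (2 <= LL N p)%nat ->
  Gv N (pt [YY N p; SS N p 0; SS N p (LL N p - 1)]) k (YY N p) = - k p 1%nat RA + - k p (LL N p) RA.
Proof.
  intros G HL. rewrite GY by (auto; apply Vset_pt; simpl; intros a [<-|[<-|[<-|[]]]]; chainok).
  rewrite (pt_in _ (YY N p)) by ptin.
  rewrite <- (sumR_delta (seq 1 (LL N p)) (fun j => - k p j RA) 1%nat); try apply seq_NoDup; try (apply in_seq; lia).
  rewrite <- (sumR_delta (seq 1 (LL N p)) (fun j => - k p j RA) (LL N p)); try apply seq_NoDup; try (apply in_seq; lia).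
  rewrite <- sumR_plus.
  apply sumR_ext_in. intros j' Hj'. apply in_seq in Hj'.
  rewrite (pt_out _ (UU N p j')) by ptout G.
  destruct (Nat.eqb_spec j' 1); destruct (Nat.eqb_spec j' (LL N p)); try lia.
  - subst. rewrite (pt_in _ (SS N p (1-1))) by (simpl; right; left; reflexivity). ring.
  - subst. rewrite (pt_in _ (SS N p (LL N p - 1))) by ptin. ring.
  - rewrite (pt_out _ (SS N p (j'-1))) by ptout G. ring.
Qed.

Lemma flat_map_ext_in {A B} (f g : A -> list B) l : (forall a, In a l -> f a = g a) -> flat_map f l = flat_map g l.
Proof. induction l; simpl; intros H; auto. rewrite H, IHl; auto. Qed.

Ltac vpt := apply Vset_pt; simpl; let a := fresh "a" in let Ha := fresh "Ha" in intros a Ha;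
  repeat destruct Ha as [<-|Ha]; try contradiction; chainok.

Theorem mainTheorem1 (net : network) (p : nat) :
  H1 net -> H2 net -> (p < length net)%nat ->
  identifiable_from net (comp_constants net p)
    [cS (nthcomp net p) (cL (nthcomp net p))]
    (Nat.max 2 (2 * cL (nthcomp net p) - 1)).
Proof.
  intros h1 h2 Hp k1 k2 P1 P2 Hyp.
  pose proof (good_of _ _ h1 h2 Hp) as G.
  pose proof (g_L _ _ G) as HL.
  assert (Hd : forall l x, (1 <= l)%nat -> (l <= 2 \/ l <= 2 * LL net p - 1)%nat ->
            FF net p k1 l x = FF net p k2 l x).
  { intros l x H1l H2l. apply Hyp; [unfold LL in *; lia | left; reflexivity]. }
  assert (pos1 : forall j t, (1 <= j <= LL net p)%nat -> 0 < k1 p j t) by (intros; apply P1; split; auto).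
  assert (pos2 : forall j t, (1 <= j <= LL net p)%nat -> 0 < k2 p j t) by (intros; apply P2; split; auto).
  assert (HK : forall m, (m <= LL net p - 1)%nat -> Kc k1 p (LL net p) m = Kc k2 p (LL net p) m).
  { intros m Hm. destruct m as [|m']; [reflexivity|].
    set (x := pt [YY net p; SS net p (LL net p - S m')]).
    assert (Vx : Vset net p x) by vpt.
    assert (Zx : Zc net p (S m') x) by (intros i Hi; split; apply pt_out; ptout G).
    pose proof (proj1 (EO_all net p k1 (S m') G Hm) x Vx Zx) as E1.
    pose proof (proj1 (EO_all net p k2 (S m') G Hm) x Vx Zx) as E2.
    rewrite Hd in E1 by lia. rewrite E1 in E2. unfold x in E2.
    rewrite (pt_in _ (YY net p)), (pt_in _ (SS net p _)) in E2 by ptin. rewrite pow1 in E2. lra. }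
  assert (Hc : forall j, (1 <= j <= LL net p)%nat -> k1 p j RC = k2 p j RC).
  { intros j Hj. set (m := (LL net p - j)%nat).
    replace j with (LL net p - m)%nat by (unfold m; lia). assert (Hm : (m <= LL net p - 1)%nat) by (unfold m; lia).
    set (x := pt [YY net p; UU net p (LL net p - m)]).
    assert (Vx : Vset net p x) by vpt.
    assert (Zx : Zc net p m x) by (intros i Hi; split; apply pt_out; ptout G).
    assert (Sx : x (SS net p (LL net p - m)) = 0) by (apply pt_out; ptout G).
    pose proof (proj2 (EO_all net p k1 m G Hm) x Vx Zx Sx) as E1.
    pose proof (proj2 (EO_all net p k2 m G Hm) x Vx Zx Sx) as E2.
    rewrite Hd in E1 by lia. rewrite E1 in E2. unfold x in E2.
    rewrite (pt_in _ (YY net p)), (pt_in _ (UU net p _)) in E2 by ptin. rewrite pow1 in E2.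
    rewrite HK in E2 by auto. pose proof (Kc_pos net p k2 m P2 G ltac:(lia)).
    apply (Rmult_eq_reg_l (Kc k2 p (LL net p) m)); lra. }
  assert (Ha : forall j, (2 <= j <= LL net p)%nat -> k1 p j RA = k2 p j RA).
  { intros j Hj. set (m := (LL net p - j)%nat).
    replace j with (LL net p - m)%nat by (unfold m; lia).
    pose proof (HK (S m) ltac:(unfold m; lia)) as E. simpl in E.
    rewrite HK, Hc in E by (unfold m; lia).
    pose proof (Kc_pos net p k2 m P2 G ltac:(lia)).
    pose proof (pos2 (LL net p - m)%nat RC ltac:(unfold m; lia)).
    apply (Rmult_eq_reg_l (Kc k2 p (LL net p) m * k2 p (LL net p - m)%nat RC)); [lra|].
    apply Rgt_not_eq. apply Rmult_lt_0_compat; auto. }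
  assert (HcL := Hc (LL net p) ltac:(lia)).
  assert (HcLpos := pos2 (LL net p) RC ltac:(lia)).
  assert (HbL : k1 p (LL net p) RB + k1 p (LL net p) RC = k2 p (LL net p) RB + k2 p (LL net p) RC).
  { set (x := pt [UU net p (LL net p)]).
    assert (Vx : Vset net p x) by vpt.
    pose proof (Hd 2%nat x ltac:(lia) ltac:(lia)) as E.
    rewrite (FF2 net p k1 x G Vx), (FF2 net p k2 x G Vx) in E. unfold x in E.
    rewrite (pt_in _ (UU net p _)), (pt_out _ (YY net p)) in E by (try ptin; ptout G).
    rewrite HcL in E. rewrite HcL.
    apply (Rmult_eq_reg_l (k2 p (LL net p) RC)); [|lra]. ring_simplify in E. ring_simplify. lra. }
  assert (HaL2 : (LL net p = 1)%nat -> k1 p 1%nat RA = k2 p 1%nat RA).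
  { intros HL1. set (x := pt [YY net p; SS net p (LL net p - 1)]).
    assert (Vx : Vset net p x) by vpt.
    pose proof (Hd 2%nat x ltac:(lia) ltac:(lia)) as E.
    rewrite (FF2 net p k1 x G Vx), (FF2 net p k2 x G Vx) in E. unfold x in E.
    rewrite (pt_in _ (YY net p)), (pt_in _ (SS net p _)), (pt_out _ (UU net p _)) in E by (try ptin; ptout G).
    rewrite HcL in E. rewrite HL1 in E.
    rewrite HL1 in HcLpos.
    apply (Rmult_eq_reg_l (k2 p 1%nat RC)); [|lra]. ring_simplify in E. ring_simplify. lra. }
  assert (Hb3 : (2 <= LL net p)%nat -> forall j, (1 <= j < LL net p)%nat ->
     k1 p j RB + k1 p j RC = k2 p j RB + k2 p j RC).
  { intros HL2 j Hj. set (x := pt [UU net p j; SS net p (LL net p - 1)]).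
    assert (Vx : Vset net p x) by vpt.
    pose proof (Hd 3%nat x ltac:(lia) ltac:(lia)) as E.
    rewrite (FF3 net p k1 x G Vx HL2), (FF3 net p k2 x G Vx HL2) in E.
    rewrite (GU net p k1 x), (GU net p k2 x) in E by (auto; lia).
    unfold x in E. rewrite !GY_pt1 in E by auto.
    rewrite (pt_in _ (SS net p _)), (pt_out _ (YY net p)), (pt_out _ (UU net p (LL net p))) in E
      by (try ptin; ptout G).
    rewrite ?HbL, ?HcL, (Ha (LL net p)) in E by lia.
    pose proof (pos2 (LL net p) RA ltac:(lia)).
    apply (Rmult_eq_reg_l (k2 p (LL net p) RC * k2 p (LL net p) RA)).
    - ring_simplify in E. ring_simplify. lra.
    - apply Rgt_not_eq. apply Rmult_lt_0_compat; auto. }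
  assert (Ha3 : (2 <= LL net p)%nat -> k1 p 1%nat RA = k2 p 1%nat RA).
  { intros HL2. set (x := pt [YY net p; SS net p 0; SS net p (LL net p - 1)]).
    assert (Vx : Vset net p x) by vpt.
    pose proof (Hd 3%nat x ltac:(lia) ltac:(lia)) as E.
    rewrite (FF3 net p k1 x G Vx HL2), (FF3 net p k2 x G Vx HL2) in E.
    rewrite (GU net p k1 x), (GU net p k2 x) in E by (auto; lia).
    rewrite (GS_mid net p k1 x), (GS_mid net p k2 x) in E by (auto; lia).
    replace (S (LL net p - 1)) with (LL net p) in E by lia.
    unfold x in E. rewrite !GY_pt2 in E by auto.
    rewrite (pt_in _ (SS net p (LL net p - 1))), (pt_in _ (YY net p)), (pt_out _ (UU net p (LL net p))),
       (pt_out _ (UU net p (LL net p - 1))) in E by (try ptin; ptout G).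
    rewrite ?HbL, ?HcL, (Ha (LL net p)) in E by lia.
    pose proof (pos2 (LL net p) RA ltac:(lia)).
    apply (Rmult_eq_reg_l (k2 p (LL net p) RC * k2 p (LL net p) RA)).
    - ring_simplify in E. ring_simplify. lra.
    - apply Rgt_not_eq. apply Rmult_lt_0_compat; auto. }
  assert (Hb : forall j, (1 <= j <= LL net p)%nat -> k1 p j RB = k2 p j RB).
  { intros j Hj. destruct (Nat.eq_dec j (LL net p)) as [->|ne].
    - rewrite HcL in HbL. lra.
    - pose proof (Hb3 ltac:(lia) j ltac:(lia)) as E. rewrite (Hc j Hj) in E. lra. }
  assert (Ha' : forall j, (1 <= j <= LL net p)%nat -> k1 p j RA = k2 p j RA).
  { intros j Hj. destruct (Nat.eq_dec j 1) as [->|ne].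
    - destruct (Nat.eq_dec (LL net p) 1); [apply HaL2 | apply Ha3]; auto; lia.
    - apply Ha; lia. }
  unfold comp_constants. apply flat_map_ext_in. intros j Hj. apply in_seq in Hj.
  unfold LL in *. rewrite Ha', Hb, Hc by lia. reflexivity.
Qed.
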